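(* Let $n\ge 1$ and $1\le k\le n+1$ be integers, let $q$ be a prime power, and let $T$ be a hereditary property of families. If every family $\mathcal{F}\subseteq 2^{[n]}$ satisfying $T$ has at most $\Sigma(n,k)$ members, then every family of subspaces of $\mathbb{F}_q^n$ with property $T$ has at most $\Sigma_q(n,k)$ members.
   Context: $[n]=\{1,\dots,n\}$ and $2^{[n]}$ is the family of all its subsets. $\mathbb{F}_q^n$ is the $n$-dimensional vector space over the field with $q$ elements. A property $T$ of families is a property that makes sense for families of members of any lattice (such as $2^{[n]}$ ordered by inclusion, or the subspaces of $\mathbb{F}_q^n$ ordered by inclusion), defined in terms of the inclusion/intersection structure of the family, so that it is preserved by injective maps preserving inclusion, intersection and span/union (e.g. properties defined by forbidding inclusion patterns); it is hereditary if every subfamily of a family with property $T$ also has property $T$. $\Sigma(n,k)=\sum_{i=1}^k\binom{n}{\lfloor\frac{n-k}{2}\rfloor+i}$ is the total size of the $k$ middle levels of $2^{[n]}$, and $\Sigma_q(n,k)=\sum_{i=1}^k{n \brack \lfloor\frac{n-k}{2}\rfloor+i}_q$, where ${n\brack j}_q=\frac{(q^n-1)(q^{n-1}-1)\cdots(q^{n-j+1}-1)}{(q^j-1)(q^{j-1}-1)\cdots(q-1)}$ is the number of $j$-dimensional subspaces of $\mathbb{F}_q^n$. *)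

(* Defs.v *)
From HB Require Import structures.
From mathcomp Require Import all_boot all_order all_algebra.
Set Implicit Arguments. Unset Strict Implicit. Unset Printing Implicit Defensive.

Definition is_lattice (L : Type) (m j : L -> L -> L) : Prop :=
  [/\ (forall x y, m x y = m y x), (forall x y, j x y = j y x),
      (forall x y z, m x (m y z) = m (m x y) z),
      (forall x y z, j x (j y z) = j (j x y) z)
    & (forall x y, m x (j x y) = x) /\ (forall x y, j x (m x y) = x)].

Definition family_property : Type :=
  forall (L : finType), (L -> L -> L) -> (L -> L -> L) -> {set L} -> Prop.

(* T depends only on the inclusion/intersection/union structure: it is
   preserved (in both directions) by injective maps preserving meet and
   join (hence inclusion). *)
Definition lattice_invariant (T : family_property) : Prop :=
  forall (L1 L2 : finType) (m1 j1 : L1 -> L1 -> L1) (m2 j2 : L2 -> L2 -> L2)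
         (f : L1 -> L2),
    is_lattice m1 j1 -> is_lattice m2 j2 -> injective f ->
    (forall x y, f (m1 x y) = m2 (f x) (f y)) ->
    (forall x y, f (j1 x y) = j2 (f x) (f y)) ->
    forall A : {set L1}, T L1 m1 j1 A <-> T L2 m2 j2 (f @: A).

Definition hereditary (T : family_property) : Prop :=
  forall (L : finType) (m j : L -> L -> L), is_lattice m j ->
    forall A B : {set L}, B \subset A -> T L m j A -> T L m j B.

(* Sigma(n,k) = sum_{i=1}^k C(n, floor((n-k)/2) + i).  For 1 <= i and
   k <= n+1 we have floor((n-k)/2) + i = (n + 2i - k)/2 with n + 2i - k >= 1,
   which avoids negative numbers (k = n+1 gives floor(-1/2) = -1). *)
Definition Sigma (n k : nat) : nat :=
  \sum_(1 <= i < k.+1) 'C(n, (n + 2 * i - k)./2).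

(* Gaussian binomial [n choose j]_q (an exact division in nat). *)
Definition qbinom (q n j : nat) : nat :=
  (\prod_(t < j) (q ^ (n - t) - 1)) %/ (\prod_(t < j) (q ^ (j - t) - 1)).

Definition Sigma_q (q n k : nat) : nat :=
  \sum_(1 <= i < k.+1) qbinom q n ((n + 2 * i - k)./2).

Import VectorInternalTheory.
HB.instance Definition _ (K : finFieldType) (vT : vectType K) :=
  [Countable of {vspace vT} by <:].
HB.instance Definition _ (K : finFieldType) (vT : vectType K) :=
  [Finite of {vspace vT} by <:].

(* Main.v *)
Require Import Defs.
From HB Require Import structures.
From mathcomp Require Import all_boot all_order all_algebra zify ring.

Module P1.
Set Implicit Arguments. Unset Strict Implicit. Unset Printing Implicit Defensive.
Import GRing.Theory.
Local Open Scope ring_scope.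
Section S.
Variable F : finFieldType.
Let q := #|F|.
Lemma card_fr d m : (m <= d)%N ->
  #|[pred A : 'M[F]_(m, d) | \rank A == m]| = (\prod_(t < m) (q ^ d - q ^ t))%N.
Proof.
pose fr m := [pred A : 'M[F]_(m, d) | \rank A == m].
rewrite -/(fr m).
elim: m => [_ | m IHm /ltnW-le_md].
  rewrite big_ord0 (@eq_card1 _ (0 : 'M_(0, d))) // => A.
  by rewrite [A]flatmx0 !inE mxrank0 !eqxx.
rewrite big_ord_recr /= -{}IHm //.
rewrite -sum_nat_const /= -sum1_card -add1n.
rewrite (partition_big dsubmx (fr m)) /= => [|A]; last first.
  rewrite !inE -{1}(vsubmxK A); move: {A}(_ A) (_ A) => Ad Au Afull.
  rewrite eqn_leq rank_leq_row -(leq_add2l (\rank Au)) -mxrank_sum_cap.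
  rewrite {1 3}[@mxrank]lock addsmxE (eqnP Afull) -lock -addnA.
  by rewrite leq_add ?rank_leq_row ?leq_addr.
apply: eq_bigr => A rAm; rewrite (reindex (col_mx^~ A)) /=; last first.
  exists usubmx => [v _ | vA]; first by rewrite col_mxKu.
  by case/andP=> _ /eqP <-; rewrite vsubmxK.
transitivity #|~: [set v *m A | v in 'rV_m]|; last first.
  rewrite cardsCs setCK card_imset ?card_mx ?card_ord ?mul1n //.
  have [B AB1] := row_freeP rAm; apply: can_inj (mulmx^~ B) _ => v.
  by rewrite -mulmxA AB1 mulmx1.
rewrite -sum1_card; apply: eq_bigl => v; rewrite !inE col_mxKd eqxx.
rewrite andbT eqn_leq rank_leq_row /= -(leq_add2r (\rank (v :&: A)%MS)).
rewrite -addsmxE mxrank_sum_cap (eqnP rAm) addnAC leq_add2r.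
rewrite (ltn_leqif (mxrank_leqif_sup _)) ?capmxSl // sub_capmx submx_refl.
by congr (~~ _); apply/submxP/imsetP=> [] [u]; exists u.
Qed.
End S.

End P1.
Import P1.

Module P2.
Set Implicit Arguments. Unset Strict Implicit. Unset Printing Implicit Defensive.
Import GRing.Theory.
Local Open Scope ring_scope.
Section D.
Variables (F : finFieldType) (d : nat).
Definition Dm (S : {set 'I_d}) : 'M[F]_d := diag_mx (\row_i (i \in S)%:R).

Lemma Dm_mul S S' : Dm S *m Dm S' = Dm (S :&: S').
Proof.
apply/matrixP => i j; rewrite mul_diag_mx !mxE inE.
by case: (i \in S); case: (i \in S'); rewrite /= ?mul1r ?mul0r ?mulr0n ?mul0rn.
Qed.

Lemma Dm_sub_eq m (Y : 'M[F]_(m,d)) S : (Y <= Dm S)%MS = (Y *m Dm S == Y).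
Proof.
apply/idP/eqP => [/submxP[X ->]|<-]; last exact: submxMl.
by rewrite -mulmxA Dm_mul setIid.
Qed.

Lemma Dm_subset S S' : (Dm S <= Dm S')%MS = (S \subset S').
Proof.
rewrite Dm_sub_eq Dm_mul; apply/eqP/idP => [e|/setIidPl -> //].
apply/subsetP => i iS; have := congr1 (fun M : 'M[F]_d => M i i) e.
rewrite !mxE !inE iS eqxx /=; case: (i \in S') => //= /eqP.
by rewrite mulr1n eq_sym oner_eq0.
Qed.

Lemma Dm_cap S S' : (Dm S :&: Dm S' == Dm (S :&: S'))%MS.
Proof.
apply/andP; split; last by rewrite sub_capmx !Dm_subset subsetIl subsetIr.
rewrite Dm_sub_eq; set X := (Dm S :&: Dm S')%MS.
have h1 : X *m Dm S == X by rewrite -Dm_sub_eq capmxSl.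
have h2 : X *m Dm S' == X by rewrite -Dm_sub_eq capmxSr.
by rewrite -Dm_mul mulmxA (eqP h1) (eqP h2).
Qed.

Lemma Dm_adds S S' : (Dm S + Dm S' == Dm (S :|: S'))%MS.
Proof.
apply/andP; split; first by rewrite addsmx_sub !Dm_subset subsetUl subsetUr.
have -> : Dm (S :|: S') = Dm S + Dm (S' :\: S).
  apply/matrixP => i j; rewrite !mxE !inE.
  by case: (i \in S); case: (i \in S'); case: (i == j); rewrite /= ?addr0 ?add0r.
by apply: addmx_sub_adds; rewrite ?submx_refl // Dm_subset subsetDl.
Qed.

Lemma rank_Dm S : \rank (Dm S) = #|S|.
Proof.
move: {2}#|S| (erefl #|S|) => c; elim: c S => [|c IH] S cS.
  have -> : S = set0 by apply/eqP; rewrite -cards_eq0 cS.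
  have -> : Dm set0 = 0 by apply/matrixP => i j; rewrite !mxE inE mul0rn.
  by rewrite mxrank0 cards0.
have [x xS] : exists x, x \in S.
  by apply/set0Pn; rewrite -cards_eq0 cS.
have e : S = [set x] :|: (S :\ x) by rewrite setD1K.
have cS0 : #|S :\ x| = c by move: cS; rewrite (cardsD1 x S) xS add1n => -[].
have := mxrank_sum_cap (Dm [set x]) (Dm (S :\ x)).
rewrite (eqmx_rank (Dm_adds _ _)) (eqmx_rank (Dm_cap _ _)) -e.
have -> : [set x] :&: (S :\ x) = set0.
  by apply/setP => y; rewrite !inE; case: eqP => // ->; rewrite eqxx.
have -> : Dm set0 = 0 by apply/matrixP => i j; rewrite !mxE inE mul0rn.
have -> : Dm [set x] = delta_mx x x.
  apply/matrixP => i j; rewrite !mxE !inE.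
  case: (boolP (i == x)) => [/eqP->|nix]; case: (boolP (j == x)) => [/eqP->|njx];
    rewrite ?eqxx //= ?mulr1n ?mulr0n ?mul0rn //.
  by rewrite eq_sym (negbTE njx).
by rewrite (@mxrank0 F) addn0 mxrank_delta (IH _ cS0) cS => ->; rewrite cS0.
Qed.
End D.
Arguments Dm {F d} S.
Arguments Dm_mul {F d} S S'.
Arguments Dm_subset {F d} S S'.
Arguments Dm_cap {F d} S S'.
Arguments Dm_adds {F d} S S'.
Arguments rank_Dm {F d} S.

End P2.
Import P2.

Module P3.
Set Implicit Arguments. Unset Strict Implicit. Unset Printing Implicit Defensive.
Import Order.TTheory GRing.Theory Num.Theory.

Section Num.
Variables (q d : nat) (N : nat -> nat).
Hypotheses (q1 : (1 < q)%N) (Npos : forall j, (j <= d)%N -> (0 < N j)%N)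
 (Nstep : forall j, (j < d)%N -> N j.+1 * (q ^ j.+1 - 1) = N j * (q ^ (d - j) - 1))
 (Nsym : forall j, (j <= d)%N -> N (d - j) = N j).

Lemma avg_le b a : (b <= a)%N -> a * (q ^ b - 1) <= b * (q ^ a - 1).
Proof.
rewrite !subn1 !predn_exp !mulnA ![_ * q.-1]mulnC -!mulnA leq_mul2l; move=> ba.
apply/orP; right; elim: a ba => [|a IH]; first by rewrite leqn0 => /eqP->.
rewrite leq_eqVlt => /orP[/eqP->//|]; rewrite ltnS => ba.
rewrite big_ord_recr /= mulSn mulnDr.
have h : \sum_(i < b) q ^ i <= b * q ^ a.
  rewrite -[b in b * _]card_ord -sum_nat_const; apply: leq_sum => i _.
  by rewrite leq_pexp2l ?(ltnW q1) // (leq_trans (ltnW (ltn_ord i))).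
by rewrite addnC leq_add // IH.
Qed.

Local Open Scope ring_scope.
Definition w j : rat := ('C(d, j))%:R / (N j)%:R.

Lemma w_le a b : (a <= d)%N -> (b <= d)%N ->
  (w a <= w b) = ('C(d, a) * N b <= 'C(d, b) * N a)%N.
Proof.
move=> ad bd; rewrite /w ler_pdivrMr ?ltr0n ?Npos // mulrAC ler_pdivlMr ?ltr0n ?Npos //.
by rewrite -!natrM ler_nat.
Qed.

Lemma w_cross t : (t < d)%N ->
  ('C(d, t.+1) * N t * (t.+1 * (q ^ t.+1 - 1)) =
     ('C(d, t) * N t) * ((d - t) * (q ^ t.+1 - 1)))%N /\
  ('C(d, t) * N t.+1 * (t.+1 * (q ^ t.+1 - 1)) =
     ('C(d, t) * N t) * (t.+1 * (q ^ (d - t) - 1)))%N.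
Proof.
move=> td; have e1 := mul_bin_left d t; have e2 := Nstep td.
move: e1 e2.
set X := 'C(d, t); set Y := 'C(d, t.+1); set Q1 := (q ^ t.+1 - 1)%N; set Q2 := (q ^ (d - t) - 1)%N.
move=> e1 e2; split.
  have -> : (Y * N t * (t.+1 * Q1) = (t.+1 * Y) * (N t * Q1))%N by ring.
  by rewrite e1; ring.
have -> : (X * N t.+1 * (t.+1 * Q1) = (N t.+1 * Q1) * (X * t.+1))%N by ring.
by rewrite e2; ring.
Qed.

Lemma Kpos t : (0 < t.+1 * (q ^ t.+1 - 1))%N.
Proof. by rewrite muln_gt0 /= subn_gt0 (leq_trans q1) // -{1}[q]expn1 leq_pexp2l // ltnW. Qed.

Lemma w_step_dec t : (t < d)%N -> (2 * t + 1 <= d)%N -> w t.+1 <= w t.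
Proof.
move=> td h; rewrite w_le ?(ltnW td) // -(leq_pmul2r (Kpos t)).
have [-> ->] := w_cross td; rewrite leq_mul2l; apply/orP; right.
by apply: avg_le; lia.
Qed.

Lemma w_step_inc t : (t < d)%N -> (d <= 2 * t + 1)%N -> w t <= w t.+1.
Proof.
move=> td h; rewrite w_le ?(ltnW td) // -(leq_pmul2r (Kpos t)).
have [-> ->] := w_cross td; rewrite leq_mul2l; apply/orP; right.
by apply: avg_le; lia.
Qed.

Lemma w_sym j : (j <= d)%N -> w (d - j) = w j.
Proof. by move=> jd; rewrite /w bin_sub // Nsym. Qed.

Lemma w_dec a b : (a <= b)%N -> (2 * b <= d + 1)%N -> w b <= w a.
Proof.
elim: b => [|b IH] ab hb; first by move: ab; rewrite leqn0 => /eqP->.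
move: ab; rewrite leq_eqVlt => /orP[/eqP->//|]; rewrite ltnS => ab.
apply: le_trans (IH ab _); last by lia.
by apply: w_step_dec; lia.
Qed.

Lemma w_inc a b : (a <= b)%N -> (b <= d)%N -> (d <= 2 * a + 1)%N -> w a <= w b.
Proof.
elim: b => [|b IH] ab bd h; first by move: ab; rewrite leqn0 => /eqP->.
move: ab; rewrite leq_eqVlt => /orP[/eqP->//|]; rewrite ltnS => ab.
apply: le_trans (IH ab _ h) _; first by lia.
by apply: w_step_inc; lia.
Qed.

Lemma w_window k j i : (1 <= k)%N -> (k <= d.+1)%N ->
  let lo := (d + 2 - k)./2 in
  (lo <= j < lo + k)%N -> ~~ (lo <= i < lo + k)%N -> (i <= d)%N -> w j <= w i.
Proof.
move=> k1 kd lo hj hi id.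
have h := odd_double_half (d + 2 - k); rewrite -/lo -muln2 in h.
have o1 : (odd (d + 2 - k) <= 1)%N by case: odd.
move: h o1; set o := nat_of_bool (odd (d + 2 - k)) => h o1.
have jd : (j <= d)%N by lia.
case/orP: (leqVgt lo i) => [loi|ilo].
  have ihi : (lo + k <= i)%N by lia.
  case/orP: (leqVgt d (2 * j + 1)) => [dj|jd2].
    by apply: w_inc; lia.
  rewrite -(w_sym id); apply: w_dec; lia.
case/orP: (leqVgt (2 * j) (d + 1)) => [jd2|dj].
  by apply: w_dec; lia.
rewrite -(w_sym id); apply: w_inc; lia.
Qed.
End Num.

Section Num2.
Variables (q d : nat) (N : nat -> nat).
Definition Pq j := (\prod_(t < j) (q ^ (d - t) - 1))%N.
Definition Qq j := (\prod_(t < j) (q ^ (j - t) - 1))%N.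
Hypotheses (q1 : (1 < q)%N) (NPQ : forall j, (j <= d)%N -> N j * Qq j = Pq j).

Lemma pow_sub1_gt0 e : (0 < e)%N -> (0 < q ^ e - 1)%N.
Proof. by move=> e0; rewrite subn_gt0 (leq_trans q1) // -{1}[q]expn1 leq_pexp2l // ltnW. Qed.

Lemma Qq_gt0 j : (0 < Qq j)%N.
Proof. by rewrite /Qq prodn_gt0 // => t; apply: pow_sub1_gt0; rewrite subn_gt0. Qed.

Lemma Pq_gt0 j : (j <= d)%N -> (0 < Pq j)%N.
Proof.
move=> jd; rewrite /Pq prodn_gt0 // => t; apply: pow_sub1_gt0.
by rewrite subn_gt0 (leq_trans (ltn_ord t)).
Qed.

Lemma N_gt0 j : (j <= d)%N -> (0 < N j)%N.
Proof. by move=> jd; have := Pq_gt0 jd; rewrite -(NPQ jd) muln_gt0 => /andP[]. Qed.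

Lemma N_step j : (j < d)%N -> N j.+1 * (q ^ j.+1 - 1) = N j * (q ^ (d - j) - 1).
Proof.
move=> jd; have e1 := NPQ jd; have e0 := NPQ (ltnW jd).
have eP : Pq j.+1 = (Pq j * (q ^ (d - j) - 1))%N by rewrite /Pq big_ord_recr.
have eQ : Qq j.+1 = ((q ^ j.+1 - 1) * Qq j)%N.
  by rewrite /Qq big_ord_recl subn0; congr (_ * _); apply: eq_bigr => t _; rewrite /bump /= add1n subSS.
apply/eqP; rewrite -(eqn_pmul2r (Qq_gt0 j)); apply/eqP.
by rewrite -mulnA -eQ e1 eP -e0; ring.
Qed.

Lemma N_0 : N 0 = 1%N.
Proof. by have := NPQ (leq0n d); rewrite /Qq /Pq !big_ord0 muln1. Qed.

Lemma N_d : N d = 1%N.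
Proof.
have := NPQ (leqnn d); rewrite -[Pq d]mul1n; move/eqP; rewrite eqn_pmul2r ?Qq_gt0 //.
by move/eqP.
Qed.

Lemma N_sym j : (j <= d)%N -> N (d - j) = N j.
Proof.
elim: j => [|j IH] jd; first by rewrite subn0 N_d N_0.
have jd' : (j < d)%N by [].
have e1 := N_step jd'.
have e2 := N_step (_ : (d - j.+1 < d)%N).
have {e2} e2 := e2 (ltac:(lia)).
have ea : (d - j.+1).+1 = d - j by lia.
have eb : d - (d - j.+1) = j.+1 by lia.
rewrite ea eb IH ?(ltnW jd) // -e1 in e2.
by apply/eqP; rewrite -(eqn_pmul2r (pow_sub1_gt0 (ltn0Sn j))) e2.
Qed.

Lemma N_qbinom j : (j <= d)%N -> N j = Pq j %/ Qq j.
Proof. by move=> jd; rewrite -(NPQ jd) mulnK // Qq_gt0. Qed.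
End Num2.

End P3.
Import P3.

Module P4.
Set Implicit Arguments. Unset Strict Implicit. Unset Printing Implicit Defensive.
Import GRing.Theory VectorInternalTheory.
Local Open Scope ring_scope.

Section V.
Variables (F : finFieldType) (vT : vectType F).
Local Notation d := (dim vT).
Implicit Types (M X : 'M[F]_d) (S : {set 'I_d}) (V : {vspace vT}).

Definition phi (M : 'M[F]_d) (S : {set 'I_d}) : {vspace vT} := mx2vs (Dm S *m M).

Lemma vs2mx_phi M S : vs2mx (phi M S) = <<Dm S *m M>>%MS. Proof. by []. Qed.

Lemma DmM_sub M S S' : M \in unitmx -> (Dm S *m M <= Dm S' *m M)%MS = (S \subset S').
Proof. by move=> uM; rewrite submxMfree ?row_free_unit // Dm_subset. Qed.

Lemma DmM_cap M S S' : M \in unitmx ->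
  (Dm S *m M :&: Dm S' *m M == Dm (S :&: S') *m M)%MS.
Proof.
move=> uM; apply/andP; split; last by rewrite sub_capmx !DmM_sub ?subsetIl ?subsetIr.
have fM : row_free M by rewrite row_free_unit.
set X := (_ :&: _)%MS.
have eX : X = X *m invmx M *m M by rewrite mulmxKV.
rewrite eX submxMfree //.
have /andP[h _] := Dm_cap (F:=F) S S'; apply: submx_trans h.
by rewrite sub_capmx; apply/andP; split; rewrite -(submxMfree _ _ fM) -eX ?capmxSl ?capmxSr.
Qed.

Lemma DmM_adds M S S' : (Dm S *m M + Dm S' *m M == Dm (S :|: S') *m M)%MS.
Proof.
apply/eqmxP; apply: eqmx_trans (eqmx_sym (addsmxMr _ _ _)) _.
by apply: eqmxMr; apply/eqmxP; exact: Dm_adds.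
Qed.

Lemma phi_inj M : M \in unitmx -> injective (phi M).
Proof.
move=> uM S S' e; have := congr1 vs2mx e; rewrite !vs2mx_phi => /genmxP /andP[h1 h2].
by apply/eqP; rewrite eqEsubset -!(DmM_sub _ _ uM) h1 h2.
Qed.

Lemma phi_cap M S S' : M \in unitmx -> phi M (S :&: S') = (phi M S :&: phi M S')%VS.
Proof.
move=> uM; apply: val_inj => /=; rewrite -genmx_cap genmx_id; apply/genmxP.
by have /andP[-> ->] := DmM_cap S S' uM.
Qed.

Lemma phi_add M S S' : phi M (S :|: S') = (phi M S + phi M S')%VS.
Proof.
apply: val_inj => /=; rewrite -genmx_adds genmx_id; apply/genmxP.
by have /andP[-> ->] := DmM_adds M S S'.
Qed.

Lemma dim_phi M S : M \in unitmx -> \dim (phi M S) = #|S|.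
Proof.
by move=> uM; rewrite /dimv vs2mx_phi mxrank_gen mxrankMfree ?row_free_unit // rank_Dm.
Qed.

Lemma lat_vs : is_lattice (@capv F vT) (@addv F vT).
Proof.
split; [exact: capvC | exact: addvC | exact: capvA | exact: addvA |].
split => x y; [apply/capv_idPl; exact: addvSl | apply/addv_idPl; exact: capvSl].
Qed.

Definition Sr (r : nat) : {set 'I_d} := [set i : 'I_d | (i < r)%N].

Lemma pid_Dm r : pid_mx r = Dm (Sr r) :> 'M[F]_d.
Proof.
apply/matrixP => i j; rewrite !mxE !inE.
case: (boolP (i == j)) => [/eqP->|nij]; first by rewrite eqxx /= mulr1n.
have -> : (i == j :> nat) = false by apply/negbTE.
by rewrite /= mulr0n.
Qed.

Lemma V_phi V : V = phi (row_ebase (vs2mx V)) (Sr (\dim V)).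
Proof.
apply: val_inj; rewrite /= -[LHS]gen_vs2mx; apply/genmxP.
rewrite -pid_Dm; have e := mulmx_ebase (vs2mx V).
apply/eqmxP; rewrite -{1}e -mulmxA; apply: eqmxMfull.
by rewrite row_full_unit col_ebase_unit.
Qed.

Definition img M := [set phi M S | S : {set 'I_d}].
Definition c (V : {vspace vT}) :=
  #|[set M : 'M[F]_d | (M \in unitmx) && (V \in img M)]|.

Lemma c_le V V' : \dim V = \dim V' -> (c V <= c V')%N.
Proof.
move=> eVV.
set M0 := row_ebase (vs2mx V); set M0' := row_ebase (vs2mx V').
have uM0 : M0 \in unitmx by exact: row_ebase_unit.
have uM0' : M0' \in unitmx by exact: row_ebase_unit.
set P := invmx M0 *m M0'.
have uP : P \in unitmx by rewrite unitmx_mul unitmx_inv uM0.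
have injP : injective (fun X : 'M[F]_d => X *m P).
  by move=> X Y /= e; rewrite -(mulmxK uP X) e mulmxK.
rewrite /c -(card_imset _ injP); apply: subset_leq_card; apply/subsetP => Y /imsetP[X].
rewrite inE => /andP[uX /imsetP[S _ eV]] ->.
rewrite inE unitmx_mul uX uP /=; apply/imsetP; exists S => //.
rewrite (V_phi V') -eVV; apply: val_inj => /=; apply/genmxP.
have e1 : (Dm S *m X == Dm (Sr (\dim V)) *m M0)%MS.
  by apply/genmxP; rewrite -vs2mx_phi -eV -vs2mx_phi -V_phi.
have e2 : Dm (Sr (\dim V)) *m M0 *m P = Dm (Sr (\dim V)) *m M0'.
  by rewrite /P mulmxA mulmxK.
rewrite -e2 [Dm S *m _]mulmxA; apply/eqmxP; apply: eqmxMr; apply/eqmxP.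
by case/andP: e1 => -> ->.
Qed.

Lemma c_eq V V' : \dim V = \dim V' -> c V = c V'.
Proof. by move=> e; apply/anti_leq; rewrite !c_le. Qed.

Lemma c_gt0 V : (0 < c V)%N.
Proof.
apply/card_gt0P; exists (row_ebase (vs2mx V)); rewrite inE row_ebase_unit /=.
by apply/imsetP; exists (Sr (\dim V)) => //; apply: V_phi.
Qed.
End V.

End P4.
Import P4.

Module P5.
Set Implicit Arguments. Unset Strict Implicit. Unset Printing Implicit Defensive.
Import GRing.Theory VectorInternalTheory.
Local Open Scope ring_scope.

Lemma basis_count (F : finFieldType) m n (B : 'M[F]_(m, n)) : \rank B = m ->
  #|[pred A : 'M[F]_(m, n) | (\rank A == m) && (A == B)%MS]| =
  #|[pred C : 'M[F]_m | \rank C == m]|.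
Proof.
move=> rB; have fB : row_free B by rewrite /row_free rB.
have injB : injective (fun C : 'M[F]_m => C *m B).
  by move=> C C' /= e; have [B' hB'] := row_freeP fB; rewrite -[C]mulmx1 -hB' mulmxA e -mulmxA hB' mulmx1.
rewrite -(card_image injB); apply: eq_card => A; rewrite !inE.
apply/andP/imageP => [[rA eAB]|[C rC ->]].
  exists (A *m pinvmx B); last by rewrite mulmxKpV //; case/andP: eAB.
  rewrite inE -(mxrankMfree _ fB) mulmxKpV //; by case/andP: eAB.
rewrite inE in rC; rewrite mxrankMfree // (eqP rC); split => //.
by rewrite -(mxrank_leqif_eq (submxMl C B)).2 mxrankMfree // (eqP rC) rB.
Qed.

Section V2.
Variables (F : finFieldType) (vT : vectType F).
Local Notation d := (dim vT).
Implicit Types (M X : 'M[F]_d) (S : {set 'I_d}) (V : {vspace vT}).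

Definition GLc := #|[set M : 'M[F]_d | M \in unitmx]|.
Definition Vj (j : nat) := [set V : {vspace vT} | \dim V == j].
Definition Nc (j : nat) := #|Vj j|.

Lemma sum_c (j : nat) : (\sum_(V in Vj j) c V = GLc * 'C(d, j))%N.
Proof.
rewrite /GLc -sum_nat_const.
under eq_bigr do rewrite /c -sum1_card big_mkcond /=.
rewrite exchange_big /= [RHS]big_mkcond /=; apply: eq_bigr => M _; rewrite inE.
case: (boolP (M \in unitmx)) => uM; last by rewrite big1 // => V _; rewrite inE (negbTE uM).
rewrite -big_mkcondr sum1_card.
rewrite -[X in 'C(X, _)]card_ord -card_draws -(card_imset _ (phi_inj uM)).
apply: eq_card => V.
rewrite [in LHS]unfold_in /= !inE uM /=.
apply/andP/imsetP => [[hV /imsetP[S _ eV]]|[S hS ->]].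
  by exists S; rewrite // inE -(dim_phi S uM) -eV.
rewrite inE in hS.
by rewrite dim_phi // (eqP hS) eqxx; split => //; apply/imsetP; exists S.
Qed.

Lemma Nc_c V : (Nc (\dim V) * c V = GLc * 'C(d, \dim V))%N.
Proof.
rewrite /Nc -sum_nat_const -(sum_c (\dim V)); apply: eq_bigr => V' hV'.
by apply: c_eq; rewrite inE in hV'; rewrite (eqP hV').
Qed.

Lemma fiber V :
  #|[pred A : 'M[F]_(\dim V, d) | (\rank A == \dim V) && (mx2vs A == V)]| =
  #|[pred C : 'M[F]_(\dim V) | \rank C == \dim V]|.
Proof.
set B := row_base (vs2mx V).
have rB : \rank B = \dim V by rewrite /B eq_row_base.
have eB : <<B>>%MS = vs2mx V.
  by rewrite -[RHS]gen_vs2mx; apply/genmxP; apply/eqmxP; exact: eq_row_base.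
rewrite -(basis_count rB); apply: eq_card => A; rewrite !inE; congr andb.
apply/eqP/genmxP => [e|e]; first by rewrite eB; exact: (congr1 vs2mx e).
by apply: val_inj => /=; rewrite e eB.
Qed.

Lemma Nc_R (j : nat) : (j <= d)%N ->
  (Nc j * #|[pred C : 'M[F]_j | \rank C == j]| =
   #|[pred A : 'M[F]_(j, d) | \rank A == j]|)%N.
Proof.
move=> jd; rewrite -[in RHS]sum1_card (partition_big (fun A => mx2vs A) (fun V => V \in Vj j)) /=;
  last by move=> A rA; rewrite inE /dimv /= mxrank_gen.
rewrite /Nc -sum_nat_const; apply: eq_bigr => V hV; rewrite sum1_card.
rewrite inE in hV; move: hV => /eqP <-; rewrite -fiber.
by apply: eq_card => A; rewrite !inE.
Qed.
End V2.

Lemma R_split (q j m : nat) : (j <= m)%N ->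
  (\prod_(t < j) (q ^ m - q ^ t) = \prod_(t < j) q ^ t * \prod_(t < j) (q ^ (m - t) - 1))%N.
Proof.
move=> jm; rewrite -big_split; apply: eq_bigr => t _ /=.
rewrite mulnBr muln1 -expnD subnKC //.
by rewrite (leq_trans (ltnW (ltn_ord t))).
Qed.

Lemma card_gt1 (F : finFieldType) : (1 < #|F|)%N.
Proof.
rewrite (cardD1 (0 : F)) (cardD1 (1 : F)) !inE oner_eq0 /=.
by [].
Qed.

Lemma Nc_PQ (F : finFieldType) (vT : vectType F) (j : nat) : (j <= dim vT)%N ->
  (Nc vT j * Qq #|F| j = Pq #|F| (dim vT) j)%N.
Proof.
move=> jd; have := Nc_R jd; rewrite !card_fr // !R_split // mulnCA.
move/eqP; rewrite eqn_pmul2l; first by move/eqP.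
rewrite prodn_gt0 // => t; rewrite expn_gt0; apply/orP; left.
by rewrite (ltn_trans _ (card_gt1 F)).
Qed.

End P5.
Import P5.

Module P6.
Set Implicit Arguments. Unset Strict Implicit. Unset Printing Implicit Defensive.
Import GRing.Theory VectorInternalTheory.

Lemma sum_ind (x lo hi a : nat) : lo <= x < hi ->
  \sum_(lo <= j < hi) (if x == j then a else 0) = a.
Proof.
case/andP => lx xh.
rewrite (@big_cat_nat _ _ _ x) ?(ltnW xh) //= [X in _ + X]big_ltn // eqxx.
rewrite big1_seq ?add0n => [|j /andP[_]]; last first.
  by rewrite mem_index_iota => /andP[_ jx]; rewrite (gtn_eqF jx).
rewrite big1_seq ?addn0 // => j /andP[_]; rewrite mem_index_iota => /andP[xj _].
by rewrite (ltn_eqF xj).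
Qed.

Lemma lat_set (T : finType) : is_lattice (@setI T) (@setU T).
Proof.
split; [exact: setIC | exact: setUC | exact: setIA | exact: setUA |].
split => x y; [apply/setIidPl; exact: subsetUl | apply/setUidPl; exact: subsetIl].
Qed.

Lemma reindex_mid (g : nat -> nat) (d k : nat) : 1 <= k <= d.+1 ->
  \sum_(1 <= i < k.+1) g ((d + 2 * i - k)./2) =
  \sum_((d + 2 - k)./2 <= j < (d + 2 - k)./2 + k) g j.
Proof.
case/andP => k1 kd; set lo := (d + 2 - k)./2.
rewrite big_add1 /= -{1}[lo]add0n big_addn addKn.
apply: eq_big_nat => i /andP[_ ik].
have -> : d + 2 * i.+1 - k = (d + 2 - k) + i.*2 by rewrite -muln2; lia.
by rewrite halfD odd_double andbF add0n doubleK addnC.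
Qed.

Unset Implicit Arguments.
Section Main.
Variables (F : finFieldType) (vT : vectType F) (k : nat) (T : family_property).
Local Notation d := (dim vT).
Local Notation q := #|F|.
Hypotheses (hk : 1 <= k <= d.+1) (hinv : lattice_invariant T) (hher : hereditary T)
  (hB : forall A : {set {set 'I_d}}, T _ (@setI _) (@setU _) A -> #|A| <= Sigma d k).

Let lo := (d + 2 - k)./2.
Definition Hs := [set V : {vspace vT} | lo <= \dim V < lo + k].

Lemma sum_H (f : {vspace vT} -> nat) :
  \sum_(V in Hs) f V = \sum_(lo <= j < lo + k) \sum_(V in Vj vT j) f V.
Proof.
transitivity (\sum_(V in Hs) \sum_(lo <= j < lo + k) (if \dim V == j then f V else 0)).
  by apply: eq_bigr => V; rewrite inE => hV; rewrite sum_ind.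
rewrite exchange_big /=; apply: eq_big_nat => j hj.
rewrite -big_mkcondr /=; apply: eq_bigl => V; rewrite !inE.
by case: eqP => [->|_]; rewrite ?hj ?andbF.
Qed.

Lemma G_avg (G : {set {vspace vT}}) : T _ (@capv _ _) (@addv _ _) G ->
  \sum_(V in G) c V <= GLc vT * Sigma d k.
Proof.
move=> TG; rewrite /GLc -sum_nat_const.
under eq_bigr do rewrite /c -sum1_card big_mkcond /=.
rewrite exchange_big /= [X in _ <= X]big_mkcond /=; apply: leq_sum => M _; rewrite inE.
case: (boolP (M \in unitmx)) => uM; last by rewrite big1 // => V _; rewrite inE (negbTE uM).
rewrite -big_mkcondr sum1_card.
set A := [set S : {set 'I_d} | phi M S \in G].
rewrite (_ : #|_| = #|phi M @: A|); last first.
  apply: eq_card => V; rewrite [in LHS]unfold_in /= !inE uM /=.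
  apply/andP/imsetP => [[hV /imsetP[S _ eV]]|[S hS ->]].
    by exists S; rewrite // inE -eV.
  by rewrite inE in hS; split => //; apply/imsetP; exists S.
rewrite card_imset; last exact: phi_inj.
apply: hB.
apply/(hinv _ _ _ _ _ _ _ (lat_set _) (lat_vs vT) (phi_inj uM) (fun x y => phi_cap x y uM) (phi_add M)).
apply: (hher _ _ _ (lat_vs vT) G _ _ TG).
by apply/subsetP => V /imsetP[S]; rewrite inE => hS ->.
Qed.

Lemma lo_facts : 2 * lo <= d + 2 - k /\ d + 1 - k <= 2 * lo.
Proof.
have h := odd_double_half (d + 2 - k); rewrite -/lo -muln2 in h.
have o1 : (odd (d + 2 - k) <= 1) by case: odd.
move: h o1; set o := nat_of_bool (odd (d + 2 - k)) => h o1.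
case/andP: hk => k1 kd; lia.
Qed.

Lemma NPQ : forall j, j <= d -> Nc vT j * Qq q j = Pq q d j.
Proof. by move=> j; apply: Nc_PQ. Qed.

Lemma pairwise V U : V \in Hs -> U \notin Hs -> c V <= c U.
Proof.
have q1 := card_gt1 F.
have Npos := N_gt0 q1 NPQ.
have Nst := N_step q1 NPQ.
have Nsy := N_sym q1 NPQ.
rewrite !inE => hV hU.
have dV : \dim V <= d by exact: rank_leq_col.
have dU : \dim U <= d by exact: rank_leq_col.
case/andP: hk => k1 kd.
have hw := w_window q1 Npos Nst Nsy k1 kd hV hU dU.
rewrite (w_le Npos dV dU) in hw.
have e1 := Nc_c V; have e2 := Nc_c U.
rewrite -(leq_pmul2l (Npos _ dV)) -(leq_pmul2l (Npos _ dU)).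
rewrite e1 mulnCA [X in _ <= X]mulnCA e2 [X in _ <= X]mulnCA leq_mul2l; apply/orP; right.
by rewrite mulnC [X in _ <= X]mulnC.
Qed.

Lemma main_gen (G : {set {vspace vT}}) : T _ (@capv _ _) (@addv _ _) G ->
  #|G| <= Sigma_q q d k.
Proof.
move=> TG.
have q1 := card_gt1 F.
have hGH : \sum_(V in G) c V <= \sum_(V in Hs) c V.
  rewrite sum_H; apply: (leq_trans (G_avg G TG)).
  rewrite /Sigma (reindex_mid (fun j => 'C(d, j)) hk) big_distrr /=.
  by apply: eq_leq; apply: eq_bigr => j _; rewrite sum_c.
have card_H : #|Hs| = Sigma_q q d k.
  rewrite -sum1_card sum_H /Sigma_q (reindex_mid (fun j => qbinom q d j) hk).
  apply: eq_big_nat => j hj; rewrite sum1_card.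
  have jd : j <= d by have := lo_facts; case/andP: hk; lia.
  exact: (N_qbinom q1 NPQ jd).
set a := #|G :\: Hs|; set b := #|Hs :\: G|.
suff ab : a <= b.
  by rewrite -card_H -(cardsID Hs G) -(cardsID G Hs) setIC leq_add2l.
set X := \sum_(U in G :\: Hs) c U; set Y := \sum_(V in Hs :\: G) c V.
have hXY : X <= Y.
  by move: hGH; rewrite (big_setID Hs) [X in _ <= X](big_setID G) setIC leq_add2l.
have hab : a * Y <= b * X.
  have -> : a * Y = \sum_(U in G :\: Hs) \sum_(V in Hs :\: G) c V by rewrite sum_nat_const.
  have -> : b * X = \sum_(U in G :\: Hs) \sum_(V in Hs :\: G) c U.
    by rewrite big_distrr; apply: eq_bigr => U _; rewrite sum_nat_const.
  apply: leq_sum => U; rewrite !inE => /andP[hU _]; apply: leq_sum => V.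
  by rewrite !inE => /andP[_ hV]; apply: pairwise; rewrite ?inE.
have [a0|a_gt0] := posnP a; first by rewrite a0.
have X_gt0 : 0 < X.
  have [U hU] : exists U, U \in G :\: Hs by apply/card_gt0P.
  by rewrite /X (bigD1 U) //= (leq_trans (c_gt0 U)) ?leq_addr.
have Y_gt0 : 0 < Y by apply: leq_trans X_gt0 hXY.
by rewrite -(leq_pmul2r Y_gt0) (leq_trans hab) // leq_mul2l hXY orbT.
Qed.
End Main.

End P6.
Import P6.

Unset Implicit Arguments.

Theorem theorem1p3 (n k : nat) (F : finFieldType) (T : family_property) :
  1 <= n -> 1 <= k <= n.+1 ->
  lattice_invariant T -> hereditary T ->
  (forall A : {set {set 'I_n}}, T _ (@setI _) (@setU _) A -> #|A| <= Sigma n k) ->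
  forall G : {set {vspace 'rV[F]_n}},
    T _ (@capv _ _) (@addv _ _) G -> #|G| <= Sigma_q #|F| n k.
Proof.
move=> _ hk hinv hher hB G TG.
have e : dim ('rV[F]_n) = n by rewrite /dim /= mul1n.
move: (main_gen F ('rV[F]_n) k T); rewrite e.
by move=> /(_ hk hinv hher hB G TG).
Qed.
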